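(* Let $G$ be a graph with a distinguished vertex $v$. For each $m\ge0$ let $G_m$ be the graph obtained by attaching one endvertex of a new $m$-vertex path to $v$ by an edge (so $G_m$ has $m$ more vertices than $G$), and let $R_m(z)$ be the reciprocal polynomial of $G_m$. Then there is a monic integer polynomial $P(z)$, depending on $G$ and $v$ but not on $m$, such that for all $m\ge2$, $$(y^2-1)R_m(z)=y^{2m}P(z)-P^*(z),$$ where $P^*(z)=z^{\deg P}P(1/z)$.
   Context: Graphs are finite simple graphs; $\chi_G$ is the characteristic polynomial of the adjacency matrix of an $n$-vertex graph $G$. The reciprocal polynomial is $R_G(z)=z^n\chi_G(z+1/z)$ if $G$ is nonbipartite and $R_G(z)=z^{n/2}\chi_G(\sqrt z+1/\sqrt z)$ if $G$ is bipartite. Here $y=\sqrt z$ if the graph ($G$, equivalently each $G_m$) is bipartite, and $y=z$ otherwise. *)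

(* Defs.v *)
From HB Require Import structures.
From mathcomp Require Import all_boot all_order all_algebra.
Set Implicit Arguments. Unset Strict Implicit. Unset Printing Implicit Defensive.
Import Order.TTheory GRing.Theory Num.Theory.
Local Open Scope ring_scope.

Definition simple_graph (T : finType) (e : rel T) : Prop :=
  (forall x y, e x y = e y x) /\ (forall x, e x x = false).

Definition bipartite (T : finType) (e : rel T) : bool :=
  [exists f : {ffun T -> bool}, [forall x, [forall y, e x y ==> (f x != f y)]]].

Definition adjmx (T : finType) (e : rel T) : 'M[int]_#|T| :=
  \matrix_(i, j) (e (enum_val i) (enum_val j))%:R.

Definition charpolyG (T : finType) (e : rel T) : {poly int} :=
  char_poly (adjmx e).

(* z^n p(z + 1/z) written out: sum_k p_k (z^2+1)^k z^(n-k), for deg p <= n. *)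
Definition recip_nb (p : {poly int}) (n : nat) : {poly int} :=
  \sum_(k < n.+1) p`_k *: ((('X ^+ 2 + 1) ^+ k) * 'X ^+ (n - k)).

(* Bipartite: z^(n/2) chi(sqrt z + 1/sqrt z), i.e. the polynomial R with
   R(w^2) = w^n chi(w + 1/w); it is obtained by keeping the even coefficients
   of w^n chi(w+1/w) (which is an even polynomial in w for bipartite G). *)
Definition recipG (T : finType) (e : rel T) : {poly int} :=
  let R := recip_nb (charpolyG e) #|T| in
  if bipartite e then \poly_(i < #|T|.+1) R`_(i.*2)%N else R.

Definition path_ext (T : finType) (e : rel T) (v : T) (m : nat)
  : rel (T + 'I_m)%type :=
  fun a b => match a, b with
  | inl x, inl y => e x y
  | inl x, inr j => (x == v) && (val j == 0%N)
  | inr i, inl y => (y == v) && (val i == 0%N)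
  | inr i, inr j => (val i == (val j).+1) || (val j == (val i).+1)
  end.

Definition recip_poly (P : {poly int}) : {poly int} :=
  \poly_(i < size P) P`_(size P - 1 - i).
Arguments path_ext {T} e v m _ _.

(* Main.v *)
Require Import Defs.
From HB Require Import structures.
From mathcomp Require Import all_boot all_order all_algebra.
From mathcomp Require Import zify ring.
Set Implicit Arguments. Unset Strict Implicit. Unset Printing Implicit Defensive.
Import Order.TTheory GRing.Theory Num.Theory.
Local Open Scope ring_scope.
From mathcomp Require Import all_fingroup.
Lemma cp_rec k (A : 'M[int]_k.+2) :
  (forall j, A ord0 j = (val j == 1%N)%:R) ->
  (forall i : 'I_k.+1, A (lift ord0 i) ord0 = (val i == 0%N)%:R) ->
  char_poly A = 'X * char_poly (row' ord0 (col' ord0 A))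
     - char_poly (row' ord0 (col' ord0 (row' ord0 (col' ord0 A)))).
Proof.
move=> Hr Hc.
rewrite /char_poly (expand_det_row _ ord0) big_ord_recl big_ord_recl big1; last first.
  by move=> j _; rewrite !mxE Hr /= mulr0n polyC0 subr0 mul0r.
rewrite addr0 !mxE !Hr /= mulr1n mulr0n polyC0 subr0 polyC1 sub0r.
rewrite /cofactor expr0 mul1r row'_col'_char_poly_mx; congr (_ + _).
rewrite (expand_det_col _ ord0) big_ord_recl big1; last first.
  move=> i _; rewrite !mxE.
  have -> : lift (lift ord0 (ord0 : 'I_k.+1)) (ord0 : 'I_k.+1) = ord0 by apply/val_inj.
  by rewrite Hc /= !mulr0n polyC0 subr0 mul0r.
rewrite addr0 !mxE.
have -> : lift (lift ord0 (ord0 : 'I_k.+1)) (ord0 : 'I_k.+1) = ord0 by apply/val_inj.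
rewrite Hc /= mulr0n sub0r /cofactor /= expr0 mul1r polyC1.
have -> : row' ord0 (col' ord0 (row' ord0 (col' (lift ord0 ord0) (char_poly_mx A))))
   = char_poly_mx (row' ord0 (col' ord0 (row' ord0 (col' ord0 A)))).
  rewrite -!row'_col'_char_poly_mx; apply/matrixP => i j; rewrite !mxE.
  have -> : lift (lift ord0 ord0) (lift ord0 j) = lift ord0 (lift ord0 j) :> 'I_k.+2
    by apply/val_inj.
  by rewrite !(inj_eq lift_inj).
by rewrite /= expr1 !mulN1r opprK.
Qed.
Lemma cp_perm k (A : 'M[int]_k) (s : 'S_k) :
  char_poly (\matrix_(i,j) A (s i) (s j)) = char_poly A.
Proof.
rewrite /char_poly.
have -> : char_poly_mx (\matrix_(i,j) A (s i) (s j))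
   = row_perm s (col_perm s (char_poly_mx A)).
  by apply/matrixP => i j; rewrite !mxE (inj_eq perm_inj).
rewrite row_permE col_permE !det_mulmx !det_perm odd_permV.
by rewrite mulrC -mulrA -signr_addb addbb expr0 mulr1.
Qed.

Lemma cp_enum (S : finType) (r : rel S) k (g : 'I_k -> S) :
  injective g -> k = #|S| ->
  charpolyG r = char_poly (\matrix_(i,j) (r (g i) (g j))%:R : 'M[int]_k).
Proof.
move=> ig Ek; subst k.
have inj : injective (fun i => enum_rank (g i)) by move=> x y /enum_rank_inj /ig.
rewrite /charpolyG -(cp_perm _ (perm inj)); congr char_poly.
by apply/matrixP => i j; rewrite /adjmx !mxE !permE /= !enum_rankK.
Qed.
Section G.
Variables (T : finType) (e : rel T) (v : T) (n : nat) (f : 'I_n -> T).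
Hypothesis f_inj : injective f.

Definition gm m (i : 'I_(m + n)) : T + 'I_m :=
  match split i with inl j => inr (rev_ord j) | inr k => inl (f k) end.

Variant gm_spec m (i : 'I_(m + n)) : T + 'I_m -> Type :=
 | GmR (j : 'I_m) of (i < m)%N & (j : nat) = (m - i.+1)%N : gm_spec i (inr j)
 | GmL (k : 'I_n) of (m <= i)%N & (k : nat) = (i - m)%N : gm_spec i (inl (f k)).

Lemma gmP m i : gm_spec i (@gm m i).
Proof.
rewrite /gm; case: splitP => [j|k] Hi.
  by constructor; rewrite Hi ?ltn_ord.
by constructor; rewrite Hi ?leq_addr // addKn.
Qed.

Lemma gm_inj m : injective (@gm m).
Proof.
move=> i1 i2; case: (gmP i1) => [j1 h1 e1|k1 h1 e1]; case: (gmP i2) => [j2 h2 e2|k2 h2 e2] //.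
- by case=> H; subst j2; apply: ord_inj; lia.
- by case=> /f_inj H; subst k2; apply: ord_inj; lia.
Qed.

Definition AM m : 'M[int]_(m + n) := \matrix_(i,j) (path_ext e v m (gm i) (gm j))%:R.


Definition iota m (a : T + 'I_m) : T + 'I_m.+1 :=
  match a with inl x => inl x | inr j => inr (widen_ord (leqnSn m) j) end.

Lemma gm_lift m (i : 'I_(m + n)) : @gm m.+1 (lift ord0 i) = iota (gm i).
Proof.
have Hb : bump 0 i = i.+1 by [].
case: (gmP i) => [j h1 e1|k h1 e1]; case: (@gmP m.+1 (lift ord0 i)) => [j2 h2 e2|k2 h2 e2] /=;
  move: h2 e2; rewrite /= Hb => h2 e2.
- by congr inr; apply: ord_inj => /=; lia.
- exfalso; lia.
- exfalso; lia.
- by congr inl; congr f; apply: ord_inj; rewrite e1 e2 subSS.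
Qed.

Lemma path_ext_iota m a b : path_ext e v m.+1 (iota a) (iota b) = path_ext e v m a b.
Proof. by case: a => [x|i]; case: b => [y|j]. Qed.

Lemma AM_shift m : row' ord0 (col' ord0 (AM m.+1)) = AM m.
Proof. by apply/matrixP => i j; rewrite !mxE !gm_lift path_ext_iota. Qed.

Lemma AM_entry1 m i j : AM m.+1 (lift ord0 i) (lift ord0 j) = AM m i j.
Proof. by rewrite !mxE !gm_lift path_ext_iota. Qed.

Lemma AM_row m j : AM m.+2 ord0 j = (val j == 1%N)%:R.
Proof.
rewrite mxE; case: (gmP (ord0 : 'I_(m.+2 + n))) => [j0 h0 e0|k0 h0 e0] //=.
case: (gmP j) => [j1 h1 e1|k1 h1 e1] /=.
  congr (_%:R); congr nat_of_bool; rewrite e0 e1 /=; apply/idP/idP => [/orP [/eqP H|/eqP H]|/eqP H]; [apply/eqP; clear -H h1; lia|apply/eqP; clear -H h1; lia|apply/orP; left; apply/eqP; clear -H h1; lia].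
have -> : (j0 == 0%N :> nat) = false by rewrite e0.
by rewrite andbF; case: eqP => //; lia.
Qed.

Lemma AM_col m (i : 'I_(m.+1 + n)) : AM m.+2 (lift ord0 i) ord0 = (val i == 0%N)%:R.
Proof.
have Hb : bump 0 i = i.+1 by [].
rewrite mxE; case: (gmP (ord0 : 'I_(m.+2 + n))) => [j0 h0 e0|k0 h0 e0] //=.
case: (@gmP m.+2 (lift ord0 i)) => [j1 h1 e1|k1 h1 e1] /=; move: h1 e1; rewrite /= Hb => h1 e1.
  congr (_%:R); congr nat_of_bool; rewrite e0 e1 /=; apply/idP/idP => [/orP [/eqP H|/eqP H]|/eqP H]; [apply/eqP; clear -H h1; lia|apply/eqP; clear -H h1; lia|apply/orP; right; apply/eqP; clear -H h1; lia].
have -> : (j0 == 0%N :> nat) = false by rewrite e0.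
by rewrite andbF; case: eqP => //; lia.
Qed.

End G.
Lemma coef_size_lt (p : {poly int}) i : p`_i != 0 -> (i < size p)%N.
Proof. by rewrite ltnNge; apply: contra => /leq_sizeP H; rewrite H. Qed.

Definition cc k j := ((('X ^+ 2 + 1 : {poly int}) ^+ k)`_j).

Lemma cc_S k j : cc k.+1 j = (if (j < 2)%N then 0 else cc k (j - 2)) + cc k j.
Proof. by rewrite /cc exprSr mulrDr mulr1 coefD coefMXn. Qed.

Lemma cc_big k j : (2 * k < j)%N -> cc k j = 0.
Proof.
elim: k j => [|k IH] j H.
  by rewrite /cc expr0 coef1; case: j H.
rewrite cc_S !IH; try lia; by case: ifP.
Qed.

Lemma cc_top k : cc k (2 * k) = 1.
Proof.
elim: k => [|k IH]; first by rewrite /cc expr0 coef1.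
rewrite cc_S (cc_big (j := (2 * k.+1)%N)); last lia.
have -> : (2 * k.+1 - 2 = 2 * k)%N by lia.
by rewrite IH ifF ?addr0 //; lia.
Qed.

Lemma cc_pal k i j : (i + j = 2 * k)%N -> cc k i = cc k j.
Proof.
elim: k i j => [|k IH] i j H.
  by have -> : i = j by lia.
rewrite !cc_S.
case: (ltnP i 2) => Hi; case: (ltnP j 2) => Hj.
- by have -> : i = j by lia.
- rewrite add0r (cc_big (j := j)); last lia.
  rewrite addr0; apply: IH; lia.
- rewrite add0r (cc_big (j := i)); last lia.
  rewrite addr0; apply: IH; lia.
- rewrite addrC; congr (_ + _); apply: IH; lia.
Qed.

Lemma coef_rnb p d i : (recip_nb p d)`_i =
  \sum_(k < d.+1) p`_k * (if (i < d - k)%N then 0 else cc k (i - (d - k))).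
Proof. by rewrite /recip_nb coef_sum; apply: eq_bigr => k _; rewrite coefZ coefMXn. Qed.

Lemma rnb_big p d i : (2 * d < i)%N -> (recip_nb p d)`_i = 0.
Proof.
move=> H; rewrite coef_rnb big1 // => k _.
case: ifP => _; first by rewrite mulr0.
by rewrite cc_big ?mulr0 //; have := ltn_ord k; lia.
Qed.

Lemma rnb_top p d : (recip_nb p d)`_(2 * d) = p`_d.
Proof.
rewrite coef_rnb big_ord_recr /= big1 ?add0r.
  by rewrite subnn subn0 ltn0 cc_top mulr1.
move=> k _; case: ifP => _; first by rewrite mulr0.
by rewrite cc_big ?mulr0 //=; have := ltn_ord k; lia.
Qed.

Lemma rnb_pal p d i j : (i + j = 2 * d)%N ->
  (recip_nb p d)`_i = (recip_nb p d)`_j.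
Proof.
move=> H; rewrite !coef_rnb; apply: eq_bigr => k _; congr (_ * _).
have := ltn_ord k => Hk.
case: ifP => H1; case: ifP => H2.
- by [].
- by rewrite cc_big //; lia.
- by rewrite cc_big //; lia.
- by apply: cc_pal; lia.
Qed.

Lemma rnb_size (p : {poly int}) d : (size (recip_nb p d) <= (2 * d).+1)%N.
Proof. by apply/leq_sizeP => i Hi; apply: rnb_big. Qed.

Lemma rnb_monic (p : {poly int}) d : p`_d = 1 ->
  recip_nb p d \is monic /\ size (recip_nb p d) = (2 * d).+1.
Proof.
move=> Hd.
have Hs : size (recip_nb p d) = (2 * d).+1.
  apply/eqP; rewrite eqn_leq rnb_size /=; apply: coef_size_lt.
  by rewrite rnb_top Hd oner_eq0.
by split => //; rewrite monicE lead_coefE Hs /= rnb_top Hd.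
Qed.

Lemma rnbB (p q : {poly int}) d : recip_nb (p - q) d = recip_nb p d - recip_nb q d.
Proof.
by rewrite /recip_nb -sumrB; apply: eq_bigr => i _; rewrite coefB scalerBl.
Qed.

Lemma rnbS (p : {poly int}) d : (size p <= d.+1)%N -> recip_nb p d.+1 = 'X * recip_nb p d.
Proof.
move=> Hs; rewrite /recip_nb big_ord_recr /= (nth_default 0 Hs) scale0r addr0.
rewrite mulr_sumr; apply: eq_bigr => i _ /=.
rewrite subSn; last by rewrite -ltnS.
by rewrite (exprS 'X (d - i)) mulrCA scalerAr.
Qed.

Lemma rnbX (p : {poly int}) d : (size p <= d.+1)%N ->
  recip_nb ('X * p) d.+1 = ('X ^+ 2 + 1) * recip_nb p d.
Proof.
move=> Hs; rewrite /recip_nb big_ord_recl coefXM eqxx scale0r add0r.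
rewrite mulr_sumr; apply: eq_bigr => i _ /=.
have -> : bump 0 i = i.+1 by [].
by rewrite coefXM /= subSS (exprS _ i) -mulrA scalerAr.
Qed.

Lemma recip_id d k (A B : {poly int}) : (0 < k)%N ->
  (forall i j, (i + j = d + k)%N -> A`_i = A`_j) -> (size A <= (d + k).+1)%N ->
  A`_(d + k) = 1 ->
  (forall i j, (i + j = d)%N -> B`_i = B`_j) -> (size B <= d.+1)%N ->
  (A - B) \is monic /\ recip_poly (A - B) = A - 'X^k * B.
Proof.
move=> k0 pA sA tA pB sB.
have zA i : (d + k < i)%N -> A`_i = 0 by move=> H; apply: (leq_sizeP _ _ sA).
have zB i : (d < i)%N -> B`_i = 0 by move=> H; apply: (leq_sizeP _ _ sB).
have top : (A - B)`_(d + k) = 1 by rewrite coefB tA zB ?subr0 //; lia.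
have Hs : size (A - B) = (d + k).+1.
  apply/eqP; rewrite eqn_leq; apply/andP; split.
    by apply/leq_sizeP => i Hi; rewrite coefB zA ?zB ?subr0 //; lia.
  by apply: coef_size_lt; rewrite top oner_eq0.
split; first by rewrite monicE lead_coefE Hs /= top.
rewrite /recip_poly Hs; apply/polyP => i; rewrite coef_poly !coefB coefXnM.
case: ltnP => Hi.
  have -> : ((d + k).+1 - 1 - i = d + k - i)%N by lia.
  rewrite (pA (d + k - i)%N i); last lia.
  case: ltnP => Hk.
    by rewrite zB ?subr0 //; lia.
  by rewrite (pB (d + k - i)%N (i - k)%N) //; lia.
rewrite zA; last lia.
case: ltnP => Hk; first lia.
by rewrite zB ?subr0 //; lia.
Qed.

Definition Ev d (q : {poly int}) := \poly_(i < d.+1) q`_(i.*2).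

Lemma EvB d (p q : {poly int}) : Ev d (p - q) = Ev d p - Ev d q.
Proof. by apply/polyP => i; rewrite coefB !coef_poly coefB; case: ifP; rewrite ?subr0. Qed.

Lemma EvD d (p q : {poly int}) : Ev d (p + q) = Ev d p + Ev d q.
Proof. by apply/polyP => i; rewrite coefD !coef_poly coefD; case: ifP; rewrite ?addr0. Qed.

Lemma EvX2 d (q : {poly int}) : Ev d.+1 ('X ^+ 2 * q) = 'X * Ev d q.
Proof.
apply/polyP => i; rewrite coefXM !coef_poly coefXnM.
case: i => [|i] //=.
rewrite doubleS ltnS; case: ifP => // _.
by rewrite subSS subSS subn0.
Qed.

Lemma Ev_ext d (q : {poly int}) : (size q <= (2 * d).+1)%N -> Ev d.+1 q = Ev d q.
Proof.
move=> Hs; apply/polyP => i; rewrite !coef_poly.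
case: (ltnP i d.+1) => H1; first by rewrite ltnS ltnW.
case: ifP => // H2.
apply: (leq_sizeP _ _ Hs); rewrite -mul2n; lia.
Qed.

Lemma Ev_pal d (q : {poly int}) : (forall i j, (i + j = 2 * d)%N -> q`_i = q`_j) ->
  forall i j, (i + j = d)%N -> (Ev d q)`_i = (Ev d q)`_j.
Proof.
move=> H i j Hij; rewrite !coef_poly !ifT; [|lia|lia].
by apply: H; rewrite -!mul2n; lia.
Qed.

Lemma Ev_size d (q : {poly int}) : (size (Ev d q) <= d.+1)%N.
Proof. exact: size_poly. Qed.

Lemma Ev_top d (q : {poly int}) : (Ev d q)`_d = q`_(2 * d).
Proof. by rewrite coef_poly ltnSn mul2n. Qed.

Lemma G1 k (R : nat -> {poly int}) Q :
  (forall m, R m.+2 = ('X ^+ k + 1) * R m.+1 - 'X ^+ k * R m) ->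
  Q = R 1%N - 'X ^+ k * R 0%N ->
  forall m, ('X ^+ k - 1) * R m = 'X ^+ (k * m) * (R 1%N - R 0%N) - Q.
Proof.
move=> Hrec -> m.
suff : ('X ^+ k - 1) * R m = 'X ^+ (k * m) * (R 1%N - R 0%N) - (R 1%N - 'X ^+ k * R 0%N) /\
       ('X ^+ k - 1) * R m.+1 = 'X ^+ (k * m.+1) * (R 1%N - R 0%N) - (R 1%N - 'X ^+ k * R 0%N).
  by case.
elim: m => [|m [IH0 IH1]].
  by rewrite muln0 muln1 expr0; split; ring.
split => //.
transitivity (('X ^+ k + 1) * (('X ^+ k - 1) * R m.+1) - 'X ^+ k * (('X ^+ k - 1) * R m)).
  by rewrite Hrec; ring.
rewrite IH0 IH1 !mulnS !exprD; ring.
Qed.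

Lemma bip_ext (T : finType) (e : rel T) (v : T) m :
  bipartite (path_ext e v m) = bipartite e.
Proof.
rewrite /bipartite; apply/existsP/existsP => [[f /forallP Hf]|[f /forallP Hf]].
  exists [ffun x => f (inl x)]; apply/forallP => x; apply/forallP => y.
  by rewrite !ffunE; exact: (forallP (Hf (inl x)) (inl y)).
exists [ffun a : T + 'I_m => match a with inl x => f x | inr j => ~~ f v (+) odd j end].
apply/forallP => [[x|i]]; apply/forallP => [[y|j]]; rewrite !ffunE /=.
- exact: (forallP (Hf x) y).
- by apply/implyP => /andP [/eqP -> /eqP ->]; case: (f v).
- by apply/implyP => /andP [/eqP -> /eqP ->]; case: (f v).
- by apply/implyP => /orP [/eqP -> | /eqP ->] /=; case: (f v); case: (odd _).
Qed.

Theorem lemma10 (T : finType) (e : rel T) (v : T) :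
  simple_graph e ->
  exists P : {poly int}, P \is monic /\
    forall m : nat, (2 <= m)%N ->
      let k := if bipartite e then 1%N else 2%N in
      ('X ^+ k - 1) * recipG (path_ext e v m)
        = 'X ^+ (k * m) * P - recip_poly P.
Proof.
move=> _.
pose n := #|T|.
pose f : 'I_n -> T := fun i => enum_val i.
have f_inj : injective f by move=> x y /enum_val_inj.
pose chi m := char_poly (AM e v f m).
have Hchi m : charpolyG (path_ext e v m) = chi m.
  apply: cp_enum; first exact: gm_inj.
  by rewrite card_sum card_ord addnC.
have Hsz m : size (chi m) = (m + n).+1 by rewrite size_char_poly.
have Htop m : (chi m)`_(m + n) = 1.
  by have /monicP := char_poly_monic (AM e v f m); rewrite lead_coefE size_char_poly.
have Hrec m : chi m.+2 = 'X * chi m.+1 - chi m.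
  have E := @cp_rec (m + n) (AM e v f m.+2) (fun j => AM_row e v f j)
                (fun i => @AM_col _ e v _ f m i).
  have E1 : row' ord0 (col' ord0 (AM e v f m.+2)) = AM e v f m.+1 :> 'M_((m + n).+1).
    by apply/matrixP => i j; rewrite mxE mxE; exact: AM_entry1.
  have E2 : row' ord0 (col' ord0 (AM e v f m.+1)) = AM e v f m :> 'M_(m + n).
    by apply/matrixP => i j; rewrite mxE mxE; exact: AM_entry1.
  rewrite E1 in E; rewrite E2 in E.
  exact: E.
pose r m := recip_nb (chi m) (m + n).
have Hr m : r m.+2 = ('X ^+ 2 + 1) * r m.+1 - 'X ^+ 2 * r m.
  rewrite /r Hrec rnbB.
  have -> : (m.+2 + n = (m.+1 + n).+1)%N by [].
  rewrite rnbX ?Hsz //.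
  have -> : (m.+1 + n = (m + n).+1)%N by [].
  rewrite (@rnbS (chi m) (m + n).+1) ?Hsz // (@rnbS (chi m) (m + n)) ?Hsz //.
  by rewrite mulrA -expr2.
have Hrs m : (size (r m) <= (2 * (m + n)).+1)%N by apply: rnb_size.
have HR m : recipG (path_ext e v m) = if bipartite e then Ev (m + n) (r m) else r m.
  rewrite /recipG /= bip_ext Hchi.
  have -> : #|{: T + 'I_m}| = (m + n)%N by rewrite card_sum card_ord addnC.
  by [].
case Hb : (bipartite e).
- pose R m := Ev (m + n) (r m).
  have [Hmon Hrp] : (R 1%N - R 0%N) \is monic /\
      recip_poly (R 1%N - R 0%N) = R 1%N - 'X ^+ 1 * R 0%N.
    apply: (@recip_id n 1%N) => //.
    + move=> i j H; apply: Ev_pal; last lia.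
      by move=> i' j' H'; apply: rnb_pal.
    + by rewrite addn1; exact: Ev_size.
    + by rewrite addn1 /R Ev_top rnb_top.
    + move=> i j H; apply: Ev_pal => //.
      by move=> i' j' H'; apply: rnb_pal.
    + exact: Ev_size.
  exists (R 1%N - R 0%N); split => // m _ /=.
  rewrite HR.
  rewrite Hb.
  apply: (@G1 1%N R) => // {}m.
  rewrite /R Hr.
  have -> : (m.+2 + n = (m + n).+2)%N by [].
  rewrite EvB mulrDl mul1r EvD !EvX2 (@Ev_ext (m + n).+1 (r m.+1)); last exact: Hrs.
  rewrite (@Ev_ext (m + n) (r m)); last exact: Hrs.
  by rewrite expr1; ring.
- have [Hmon Hrp] : (r 1%N - r 0%N) \is monic /\
      recip_poly (r 1%N - r 0%N) = r 1%N - 'X ^+ 2 * r 0%N.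
    apply: (@recip_id (2 * n) 2%N) => //.
    + by move=> i j H; apply: rnb_pal; lia.
    + have := Hrs 1%N; rewrite (_ : (2 * n + 2 = 2 * (1 + n))%N) //; lia.
    + rewrite (_ : (2 * n + 2 = 2 * (1 + n))%N); last lia.
      by rewrite /r rnb_top.
    + by move=> i j H; apply: rnb_pal.
  exists (r 1%N - r 0%N); split => // m _ /=.
  rewrite HR.
  rewrite Hb; exact: (@G1 2%N r).
Qed.
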